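(* Let $I\subseteq\mathbb K[x,y,z]$ be a good ideal with $\mu_1=x^{d_1},\mu_2=y^{d_2},\mu_3=z^{d_3}\in G(I)$. (i) If $I=\langle\mu_1,\mu_2,\mu_3\rangle$, then $I^2$ is good and $I^k$ is bad for every integer $k\ge3$. (ii) If $|G(I)|>3$, then $I^k$ is bad for every integer $k\ge2$.
   Context: Let $\mathbb K$ be a field, $R=\mathbb K[x_1,\dots,x_n]$ (here $n=3$), $\mathfrak m=\langle x_1,\dots,x_n\rangle$, $\mathbb N=\{0,1,2,\dots\}$. A monomial $x_1^{\alpha_1}\cdots x_n^{\alpha_n}$ is identified with the point $(\alpha_1,\dots,\alpha_n)\in\mathbb N^n$. For a monomial ideal $I$, $G(I)$ denotes its (unique) minimal monomial generating set. If $I$ is an $\mathfrak m$-primary monomial ideal, then for each $i$ there is a unique $d_i\ge1$ with $x_i^{d_i}\in G(I)$; write $\mu_i=x_i^{d_i}$. For $(a_1,\dots,a_n)\in\mathbb N^n$ the box associated to $I$ is $B_{a_1,\dots,a_n}=([a_1d_1,(a_1+1)d_1]\times\cdots\times[a_nd_n,(a_n+1)d_n])\cap\mathbb N^n$; a monomial belongs to a box if its exponent vector does. An $\mathfrak m$-primary monomial ideal $I$ is called good if for every integer $l\ge1$, every element of $G(I^l)$ belongs to some box $B_{a_1,\dots,a_n}$ with $a_1+\dots+a_n=l-1$; otherwise bad. (Goodness of $I^k$ is defined with respect to its own pure powers $x_i^{kd_i}\in G(I^k)$.) *)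

(* Defs.v *)
(* Monomials of K[x,y,z] are identified with exponent
   vectors in N^3 (triples (a,b,c) ~ x^a y^b z^c). A monomial ideal is
   represented by its set of monomials (a predicate on N^3); the field K
   plays no role in the combinatorics of monomial ideals. *)
From mathcomp Require Import all_boot.
Set Implicit Arguments. Unset Strict Implicit. Unset Printing Implicit Defensive.

Definition mono := (nat * nat * nat)%type.

Definition mx (u : mono) := u.1.1.
Definition my (u : mono) := u.1.2.
Definition mz (u : mono) := u.2.

Definition mmul (u v : mono) : mono := (mx u + mx v, my u + my v, mz u + mz v).

Definition mdvd (u v : mono) : bool :=
  [&& mx u <= mx v, my u <= my v & mz u <= mz v].

Definition ideal_of (S : seq mono) : mono -> Prop :=
  fun u => exists2 s, s \in S & mdvd s u.

Fixpoint ipow (J : mono -> Prop) (l : nat) : mono -> Prop :=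
  match l with
  | 0 => fun _ => True
  | l'.+1 => fun u => exists a b, [/\ J a, ipow J l' b & mdvd (mmul a b) u]
  end.

Definition inG (J : mono -> Prop) (u : mono) : Prop :=
  J u /\ (forall v, J v -> mdvd v u -> v = u).

Definition mprimary_with (J : mono -> Prop) (d1 d2 d3 : nat) : Prop :=
  [/\ 0 < d1, 0 < d2 & 0 < d3] /\
  [/\ inG J (d1, 0, 0), inG J (0, d2, 0) & inG J (0, 0, d3)].

Definition mprimary (J : mono -> Prop) : Prop :=
  exists d1 d2 d3, mprimary_with J d1 d2 d3.

Definition in_box (d1 d2 d3 a1 a2 a3 : nat) (u : mono) : bool :=
  [&& a1 * d1 <= mx u <= a1.+1 * d1,
      a2 * d2 <= my u <= a2.+1 * d2 &
      a3 * d3 <= mz u <= a3.+1 * d3].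

Definition good (J : mono -> Prop) : Prop :=
  exists d1 d2 d3, mprimary_with J d1 d2 d3 /\
    forall l, 0 < l -> forall u, inG (ipow J l) u ->
      exists a1 a2 a3, a1 + a2 + a3 = l.-1 /\ in_box d1 d2 d3 a1 a2 a3 u.

Definition bad (J : mono -> Prop) : Prop := mprimary J /\ ~ good J.

(* Main.v *)
Require Import Defs.
From mathcomp Require Import all_boot.
From mathcomp Require Import zify.
From Stdlib Require Import Classical.

Ltac unf := rewrite /mdvd /mmul /mx /my /mz /=.

Lemma mdvd_refl u : mdvd u u.
Proof. case: u => [[a b] c]; unf; apply/and3P; split; lia. Qed.

Lemma mdvd_trans u v w : mdvd u v -> mdvd v w -> mdvd u w.
Proof.
case: u => [[a b] c]; case: v => [[a' b'] c']; case: w => [[a'' b''] c''].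
unf => /and3P[? ? ?] /and3P[? ? ?]; apply/and3P; split; lia.
Qed.

Lemma ipow_up J n b c : ipow J n b -> mdvd b c -> ipow J n c.
Proof.
case: n => [//|n] [a [b' [Ha Hb Hd]]] Hbc; exists a, b'; split => //.
exact: mdvd_trans Hd Hbc.
Qed.

Lemma ipow_mul J m n a b : ipow J m a -> ipow J n b -> ipow J (m+n) (mmul a b).
Proof.
elim: m a => [|m IH] a /= Ha Hb.
- apply: ipow_up Hb _. case: a {Ha} => [[? ?] ?]; case: b => [[? ?] ?].
  unf; apply/and3P; split; lia.
- rewrite ?addSn. case: Ha => a1 [a2 [H1 H2 H3]]. exists a1, (mmul a2 b).
  split => //; first exact: IH.
  clear IH H1 H2 Hb. move: H3; case: a1 => [[? ?] ?]; case: a2 => [[? ?] ?];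
  case: a => [[? ?] ?]; case: b => [[? ?] ?].
  unf => /and3P[? ? ?]; apply/and3P; split; lia.
Qed.

Lemma ipow_split J m n c : ipow J (m+n) c ->
  exists a b, [/\ ipow J m a, ipow J n b & mdvd (mmul a b) c].
Proof.
elim: m c => [|m IH] c H.
- exists (0,0,0), c; split => //. case: c {H} => [[? ?] ?]; unf; apply/and3P; split; lia.
- rewrite ?addSn in H. case: H => a1 [b1 [H1 H2 H3]].
  have [a2 [b2 [Ha2 Hb2 Hd]]] := IH _ H2.
  exists (mmul a1 a2), b2; split => //.
  + exists a1, a2; split => //; exact: mdvd_refl.
  + clear IH H1 H2 Ha2 Hb2. move: H3 Hd; case: a1 => [[? ?] ?]; case: a2 => [[? ?] ?];
    case: b1 => [[? ?] ?]; case: b2 => [[? ?] ?]; case: c => [[? ?] ?].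
    unf => /and3P[? ? ?] /and3P[? ? ?]; apply/and3P; split; lia.
Qed.

Lemma ipow_pow J g n : J g -> ipow J n (n * mx g, n * my g, n * mz g).
Proof.
move=> Jg; elim: n => [//|n IH]. exists g, (n * mx g, n * my g, n * mz g); split => //.
case: g Jg {IH} => [[a b] c] _; unf; apply/and3P; split; lia.
Qed.

Lemma lt_sum (w v : mono) : mdvd w v -> w <> v -> mx w + my w + mz w < mx v + my v + mz v.
Proof.
case: w => [[a b] c]; case: v => [[a' b'] c']; unf => /and3P[h1 h2 h3] Hne.
have: ~ (a = a' /\ b = b' /\ c = c') by move=> [? [? ?]]; subst.
lia.
Qed.

Lemma exists_min (K : mono -> Prop) v : K v -> exists2 u, inG K u & mdvd u v.
Proof.
have: forall n v, mx v + my v + mz v <= n -> K v -> exists2 u, inG K u & mdvd u v;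
  last by move=> H; exact: (H _ v (leqnn _)).
move=> n; elim: n => [|n IH] {}v Hn Kv;
case: (classic (exists w, K w /\ mdvd w v /\ w <> v)) => [[w [Kw [Hwv Hne]]]|Hno].
- have := @lt_sum w v Hwv Hne; lia.
- exists v; last exact: mdvd_refl. split => // w Kw Hwv.
  apply: NNPP => Hne; apply: Hno; eauto.
- have := @lt_sum w v Hwv Hne => Hl.
  have [u Hu Huw] := IH w ltac:(lia) Kw. exists u => //; exact: mdvd_trans Huw Hwv.
- exists v; last exact: mdvd_refl. split => // w Kw Hwv.
  apply: NNPP => Hne; apply: Hno; eauto.
Qed.

Lemma inG_dvd_eq K u v : inG K u -> inG K v -> mdvd u v -> u = v.
Proof. move=> Hu Hv Huv; exact: Hv.2 _ Hu.1 Huv. Qed.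

Lemma pure_lb J d1 d2 d3 k w : mprimary_with J d1 d2 d3 -> ipow J k w ->
  [/\ (my w = 0 -> mz w = 0 -> k * d1 <= mx w),
      (mx w = 0 -> mz w = 0 -> k * d2 <= my w) &
      (mx w = 0 -> my w = 0 -> k * d3 <= mz w)].
Proof.
move=> [_ [Gx Gy Gz]]; elim: k w => [|k IH] w /=.
  by move=> _; split => *; rewrite mul0n.
move=> [a [b [Ja Hb Hd]]]. have [IH1 IH2 IH3] := IH b Hb.
move: Hd Ja IH1 IH2 IH3; case: a => [[a1 a2] a3]; case: b {Hb} => [[b1 b2] b3];
case: w => [[w1 w2] w3]; unf => /and3P[h1 h2 h3] Ja IH1 IH2 IH3.
split => e1 e2.
- have: d1 <= a1.
    case: (leqP d1 a1) => // hl. have := Gx.2 _ Ja; unf.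
    have -> : a2 = 0 by lia. have -> : a3 = 0 by lia.
    move=> H; have := H ltac:(apply/and3P; split; lia); case; lia.
  have := IH1 ltac:(lia) ltac:(lia); lia.
- have: d2 <= a2.
    case: (leqP d2 a2) => // hl. have := Gy.2 _ Ja; unf.
    have -> : a1 = 0 by lia. have -> : a3 = 0 by lia.
    move=> H; have := H ltac:(apply/and3P; split; lia); case; lia.
  have := IH2 ltac:(lia) ltac:(lia); lia.
- have: d3 <= a3.
    case: (leqP d3 a3) => // hl. have := Gz.2 _ Ja; unf.
    have -> : a1 = 0 by lia. have -> : a2 = 0 by lia.
    move=> H; have := H ltac:(apply/and3P; split; lia); case; lia.
  have := IH3 ltac:(lia) ltac:(lia); lia.
Qed.

Lemma pure_inG J d1 d2 d3 k : mprimary_with J d1 d2 d3 -> 0 < k ->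
  mprimary_with (ipow J k) (k * d1) (k * d2) (k * d3).
Proof.
move=> Hp Hk; have Hp' := Hp; move: Hp' => [[p1 p2 p3] [Gx Gy Gz]].
split; first by apply/and3P; rewrite !muln_gt0 Hk p1 p2 p3.
split; split.
- have := @ipow_pow J _ k Gx.1; rewrite /mx /my /mz /= !muln0 //.
- move=> v Hv; have [H1 _ _] := @pure_lb J d1 d2 d3 k v Hp Hv.
  case: v Hv H1 => [[v1 v2] v3] _; unf => H1 /and3P[h1 h2 h3].
  have := H1 ltac:(lia) ltac:(lia) => h. have -> : v1 = k * d1 by lia. by do 2 f_equal; lia.
- have := @ipow_pow J _ k Gy.1; rewrite /mx /my /mz /= !muln0 //.
- move=> v Hv; have [_ H1 _] := @pure_lb J d1 d2 d3 k v Hp Hv.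
  case: v Hv H1 => [[v1 v2] v3] _; unf => H1 /and3P[h1 h2 h3].
  have := H1 ltac:(lia) ltac:(lia) => h. have -> : v2 = k * d2 by lia. by do 2 f_equal; lia.
- have := @ipow_pow J _ k Gz.1; rewrite /mx /my /mz /= !muln0 //.
- move=> v Hv; have [_ _ H1] := @pure_lb J d1 d2 d3 k v Hp Hv.
  case: v Hv H1 => [[v1 v2] v3] _; unf => H1 /and3P[h1 h2 h3].
  have := H1 ltac:(lia) ltac:(lia) => h. have -> : v3 = k * d3 by lia. by do 2 f_equal; lia.
Qed.

Lemma inG_pure_x K a b : inG K (a,0,0) -> inG K (b,0,0) -> a = b.
Proof.
move=> Ha Hb; case: (leqP a b) => h.
- have E := @inG_dvd_eq K _ _ Ha Hb ltac:(unf; lia). by case: E.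
- have E := @inG_dvd_eq K _ _ Hb Ha ltac:(unf; lia). by case: E.
Qed.
Lemma inG_pure_y K a b : inG K (0,a,0) -> inG K (0,b,0) -> a = b.
Proof.
move=> Ha Hb; case: (leqP a b) => h.
- have E := @inG_dvd_eq K _ _ Ha Hb ltac:(unf; lia). by case: E.
- have E := @inG_dvd_eq K _ _ Hb Ha ltac:(unf; lia). by case: E.
Qed.
Lemma inG_pure_z K a b : inG K (0,0,a) -> inG K (0,0,b) -> a = b.
Proof.
move=> Ha Hb; case: (leqP a b) => h.
- have E := @inG_dvd_eq K _ _ Ha Hb ltac:(unf; lia). by case: E.
- have E := @inG_dvd_eq K _ _ Hb Ha ltac:(unf; lia). by case: E.
Qed.

Lemma not_good_gen J d1 d2 d3 k v : mprimary_with J d1 d2 d3 -> 0 < k ->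
  ipow J (2 * k) v -> mx v < k * d1 -> my v < k * d2 -> mz v < k * d3 ->
  bad (ipow J k).
Proof.
move=> Hp Hk Hv h1 h2 h3.
have Hp2 := @pure_inG J d1 d2 d3 k Hp Hk.
split; first by exists (k * d1), (k * d2), (k * d3).
move=> [e1 [e2 [e3 [[_ [Gx Gy Gz]] Hg]]]].
move: Hp2 => [_ [Gx' Gy' Gz']].
have E1 := @inG_pure_x _ _ _ Gx Gx'. have E2 := @inG_pure_y _ _ _ Gy Gy'. have E3 := @inG_pure_z _ _ _ Gz Gz'.
subst e1 e2 e3.
have Hv2 : ipow (ipow J k) 2 v.
  have : 2 * k = k + k by lia.
  move=> E; rewrite E in Hv.
  have [a [b [Ha Hb Hd]]] := @ipow_split J k k v Hv.
  exists a, b; split => //. exists b, (0,0,0); split => //.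
  case: b {Ha Hb Hd} => [[? ?] ?]; unf; apply/and3P; split; lia.
have [u Hu Huv] := @exists_min _ v Hv2.
have [a1 [a2 [a3 [Hs Hb]]]] := Hg 2 isT u Hu.
move: Hb Huv h1 h2 h3; rewrite /in_box.
case: u {Hu} => [[u1 u2] u3]; case: v {Hv Hv2} => [[v1 v2] v3]; unf.
move=> /and3P[/andP[b1 _] /andP[b2 _] /andP[b3 _]] /and3P[c1 c2 c3] h1 h2 h3.
have : a1 = 1 \/ a2 = 1 \/ a3 = 1 by lia.
case=> [E|[E|E]]; rewrite E mul1n in b1 b2 b3; lia.
Qed.

Definition Wge (d1 d2 d3 : nat) (u : mono) (n : nat) : Prop :=
  exists p q r, [/\ n <= p + q + r, p * d1 <= mx u, q * d2 <= my u & r * d3 <= mz u].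

Lemma Wge_ipow (K : mono -> Prop) c d1 d2 d3 :
  (forall u, K u <-> Wge d1 d2 d3 u c) ->
  forall l u, ipow K l u <-> Wge d1 d2 d3 u (l * c).
Proof.
move=> HK; elim=> [|l IH] u.
  by split => // _; exists 0, 0, 0; rewrite !mul0n; split.
split.
- move=> [a [b [Ha Hb Hd]]].
  have [p [q [r [s1 s2 s3 s4]]]] := (HK a).1 Ha.
  have [p' [q' [r' [t1 t2 t3 t4]]]] := (IH b).1 Hb.
  exists (p + p'), (q + q'), (r + r'); rewrite !mulnDl.
  move: Hd s2 s3 s4 t2 t3 t4; case: a {Ha} => [[? ?] ?]; case: b {Hb} => [[? ?] ?];
  case: u => [[? ?] ?]; unf => /and3P[? ? ?] *; split; lia.
- move=> [p [q [r [s1 s2 s3 s4]]]].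
  move: s2 s3 s4; case: u => [[u1 u2] u3]; rewrite /mx /my /mz /= => s2 s3 s4.
  have [p0 [q0 [r0 [h1 h2 h3 h4]]]] :
    exists p0 q0 r0, [/\ p0 <= p, q0 <= q, r0 <= r & p0 + q0 + r0 = c].
    exists (minn c p), (minn (c - minn c p) q), (c - minn c p - minn (c - minn c p) q).
    split; lia.
  have m1 := leq_mul h1 (leqnn d1). have m2 := leq_mul h2 (leqnn d2).
  have m3 := leq_mul h3 (leqnn d3).
  exists (p0 * d1, q0 * d2, r0 * d3), (u1 - p0 * d1, u2 - q0 * d2, u3 - r0 * d3).
  split.
  + apply/HK; exists p0, q0, r0; rewrite /mx /my /mz /=; split; lia.
  + apply/IH; exists (p - p0), (q - q0), (r - r0); rewrite /mx /my /mz /= !mulnBl.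
    rewrite mulSn in s1; split; lia.
  + unf; apply/and3P; split; lia.
Qed.

Lemma J_char d1 d2 d3 u : 0 < d1 -> 0 < d2 -> 0 < d3 ->
  ideal_of [:: (d1, 0, 0); (0, d2, 0); (0, 0, d3)] u <-> Wge d1 d2 d3 u 1.
Proof.
move=> p1 p2 p3; split.
- move=> [s]; rewrite !inE => /or3P[/eqP->|/eqP->|/eqP->];
  case: u => [[u1 u2] u3]; unf => H.
  + by exists 1, 0, 0; rewrite /mx /my /mz /=; split; lia.
  + by exists 0, 1, 0; rewrite /mx /my /mz /=; split; lia.
  + by exists 0, 0, 1; rewrite /mx /my /mz /=; split; lia.
- move=> [p [q [r [s1 s2 s3 s4]]]].
  move: s2 s3 s4; case: u => [[u1 u2] u3]; rewrite /mx /my /mz /= => s2 s3 s4.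
  case: (posnP p) => hp.
  case: (posnP q) => hq.
  + have hr : 0 < r by lia.
    have := leq_pmull d3 hr => m.
    exists (0, 0, d3); first by rewrite !inE eqxx !orbT.
    unf; lia.
  + have := leq_pmull d2 hq => m.
    exists (0, d2, 0); first by rewrite !inE eqxx !orbT.
    unf; lia.
  + have := leq_pmull d1 hp => m.
    exists (d1, 0, 0); first by rewrite !inE eqxx.
    unf; lia.
Qed.

Lemma half_split l p q r : 0 < l -> p + q + r = l * 2 ->
  exists a1 a2 a3, [/\ a1 + a2 + a3 = l.-1,
    2 * a1 <= p <= 2 * a1 + 2, 2 * a2 <= q <= 2 * a2 + 2 & 2 * a3 <= r <= 2 * a3 + 2].
Proof.
move=> Hl Hs.
have [s1 [e1 [E1 P1]]] : exists s e, e <= 1 /\ p = 2 * s + e.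
  by exists (p %/ 2), (p %% 2); split; lia.
have [s2 [e2 [E2 P2]]] : exists s e, e <= 1 /\ q = 2 * s + e.
  by exists (q %/ 2), (q %% 2); split; lia.
have [s3 [e3 [E3 P3]]] : exists s e, e <= 1 /\ r = 2 * s + e.
  by exists (r %/ 2), (r %% 2); split; lia.
subst p q r.
case: e1 E1 Hs => [|[|?]] E1 Hs; last lia;
case: e2 E2 Hs => [|[|?]] E2 Hs; try lia;
case: e3 E3 Hs => [|[|?]] E3 Hs; try lia;
case: (posnP s1) => h1; case: (posnP s2) => h2; case: (posnP s3) => h3;
first [ by exists s1, s2, s3; split; lia
      | by exists s1.-1, s2, s3; split; lia
      | by exists s1, s2.-1, s3; split; lia
      | by exists s1, s2, s3.-1; split; lia
      | lia ].
Qed.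

Theorem mainTheorem15 (S : seq mono) (d1 d2 d3 : nat) :
  good (ideal_of S) ->
  mprimary_with (ideal_of S) d1 d2 d3 ->
  ((forall u, ideal_of S u <-> ideal_of [:: (d1, 0, 0); (0, d2, 0); (0, 0, d3)] u) ->
     good (ipow (ideal_of S) 2) /\
     (forall k, 3 <= k -> bad (ipow (ideal_of S) k))) /\
  ((exists gs : seq mono,
      [/\ uniq gs, 3 < size gs & forall g, g \in gs -> inG (ideal_of S) g]) ->
     forall k, 2 <= k -> bad (ipow (ideal_of S) k)).
Proof.
move=> _ Hprim.
have Hprim' := Hprim; move: Hprim' => [[p1 p2 p3] [Gx Gy Gz]].
set J := ideal_of S.
split.
- move=> Heq. split.
  + have HJ : forall u, J u <-> Wge d1 d2 d3 u 1.
      by move=> u; have := @J_char d1 d2 d3 u p1 p2 p3; have := Heq u; tauto.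
    have H1 := @Wge_ipow J 1 d1 d2 d3 HJ.
    have HJ2 : forall u, ipow J 2 u <-> Wge d1 d2 d3 u 2 by move=> u; exact: H1 2 u.
    have H2 := @Wge_ipow (ipow J 2) 2 d1 d2 d3 HJ2.
    exists (2 * d1), (2 * d2), (2 * d3); split; first exact: (@pure_inG J d1 d2 d3 2 Hprim isT).
    move=> l Hl u [Hu Hmin].
    have [p [q [r [s1 s2 s3 s4]]]] := (H2 l u).1 Hu.
    have [p0 [q0 [r0 [h1 h2 h3 h4]]]] :
      exists p0 q0 r0, [/\ p0 <= p, q0 <= q, r0 <= r & p0 + q0 + r0 = l * 2].
      exists (minn (l * 2) p), (minn (l * 2 - minn (l * 2) p) q),
        (l * 2 - minn (l * 2) p - minn (l * 2 - minn (l * 2) p) q).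
      split; lia.
    have m1 := leq_mul h1 (leqnn d1). have m2 := leq_mul h2 (leqnn d2).
    have m3 := leq_mul h3 (leqnn d3).
    have Hv : ipow (ipow J 2) l (p0 * d1, q0 * d2, r0 * d3).
      apply/H2; exists p0, q0, r0; rewrite /mx /my /mz /=; split; lia.
    have E := Hmin _ Hv ltac:(move: s2 s3 s4; case: u {Hu Hmin} => [[? ?] ?]; unf => *; lia).
    rewrite -E.
    have [a1 [a2 [a3 [Hs b1 b2 b3]]]] := @half_split l p0 q0 r0 Hl h4.
    exists a1, a2, a3; split => //; rewrite /in_box /mx /my /mz /=.
    apply/and3P; split; apply/andP; split; nia.
  + move=> k Hk.
    have Hv := @ipow_mul J _ _ _ _ (@ipow_pow J _ (k - 1) Gx.1)
               (@ipow_mul J _ _ _ _ (@ipow_pow J _ (k - 1) Gy.1) (@ipow_pow J _ 2 Gz.1)).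
    have E : 2 * k = k - 1 + (k - 1 + 2) by lia.
    rewrite -E in Hv.
    apply: (@not_good_gen J d1 d2 d3 k _ Hprim ltac:(lia) Hv); unf; nia.
- move=> [gs [Hu Hs Hall]] k Hk.
  have [g [Hg Hng]] : exists g, g \in gs /\ g \notin [:: (d1, 0, 0); (0, d2, 0); (0, 0, d3)].
    apply: NNPP => H.
    have sub : {subset gs <= [:: (d1, 0, 0); (0, d2, 0); (0, 0, d3)]}.
      move=> g Hg; apply/negPn/negP => Hn; apply: H; by exists g.
    have := uniq_leq_size Hu sub; move=> h; have := leq_ltn_trans h Hs; by rewrite ltnn.
  move: Hg Hng; case: g => [[g1 g2] g3] Hg Hng.
  move: Hng; rewrite !inE !negb_or => /and3P[n1 n2 n3].
  have [Jg Gmin] := Hall _ Hg.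
  have lx : g1 < d1.
    case: (leqP d1 g1) => // h; have E := Gmin _ Gx.1 ltac:(unf; lia).
    by rewrite -E eqxx in n1.
  have ly : g2 < d2.
    case: (leqP d2 g2) => // h; have E := Gmin _ Gy.1 ltac:(unf; lia).
    by rewrite -E eqxx in n2.
  have lz : g3 < d3.
    case: (leqP d3 g3) => // h; have E := Gmin _ Gz.1 ltac:(unf; lia).
    by rewrite -E eqxx in n3.
  have Hv := @ipow_mul J _ _ _ _ (@ipow_pow J _ 1 Jg) (@ipow_mul J _ _ _ _ (@ipow_pow J _ (k - 1) Gx.1)
               (@ipow_mul J _ _ _ _ (@ipow_pow J _ (k - 1) Gy.1) (@ipow_pow J _ 1 Gz.1))).
  have E : 2 * k = 1 + (k - 1 + (k - 1 + 1)) by lia.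
  rewrite -E in Hv.
  apply: (@not_good_gen J d1 d2 d3 k _ Hprim ltac:(lia) Hv); unf; nia.
Qed.
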